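(* Let $T$ be an array and let $s, n_1, n_2 \ge 0$ be integers such that positions $s,\dots,s+n_1-1$ of $T$ hold a list $A$ of $n_1$ distinct elements and positions $s+n_1,\dots,s+n_1+n_2-1$ hold a list $B$ of $n_2$ further distinct elements. Suppose $A$ and $B$ are randomly shuffled, i.e. each is in a uniformly random order, independently of each other and of the random bits and random integers drawn by the procedure. Then after running $\textsc{Merge}(T,s,n_1,n_2)$ (defined in the context), positions $s,\dots,s+n_1+n_2-1$ of $T$ hold a randomly shuffled union $C$ of $A$ and $B$, i.e. the $n=n_1+n_2$ elements in a uniformly random order.
   Context: The procedure $\textsc{Merge}(T,s,n_1,n_2)$: set $i\gets s$, $j\gets s+n_1$, $n\gets s+n_1+n_2$. Repeat: draw an independent fair random bit; if it is $0$, then break out of the loop if $i=j$; if it is $1$, then break out of the loop if $j=n$, and otherwise swap $T[i]$ and $T[j]$ and set $j\gets j+1$; in either non-breaking case set $i\gets i+1$. After the loop, while $i<n$: draw an integer $m$ uniformly at random from $\{s,\dots,i\}$ (independently of everything else), swap $T[i]$ and $T[m]$, and set $i\gets i+1$. *)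

(* Defs.v *)
From mathcomp Require Import all_boot all_order all_algebra.
Set Implicit Arguments. Unset Strict Implicit. Unset Printing Implicit Defensive.
Import GRing.Theory Num.Theory.
Local Open Scope ring_scope.

Definition dist (A : Type) := seq (rat * A).

Definition dret {A : Type} (x : A) : dist A := [:: (1, x)].

Definition dbind {A B : Type} (d : dist A) (f : A -> dist B) : dist B :=
  flatten [seq [seq (px.1 * qy.1, qy.2) | qy <- f px.2] | px <- d].

Definition prob {A : Type} (d : dist A) (P : A -> bool) : rat :=
  \sum_(px <- d | P px.2) px.1.

Definition unif_list {A : Type} (l : seq A) : dist A :=
  [seq (1 / (size l)%:R, x) | x <- l].

Definition flip : dist bool := unif_list [:: false; true].

Definition unif_range (lo hi : nat) : dist nat := unif_list (iota lo (hi - lo).+1).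

Definition swap {X : Type} (T : nat -> X) (i j : nat) : nat -> X :=
  fun k => if k == i then T j else if k == j then T i else T k.

Definition fill {X : Type} (T : nat -> X) (s : nat) (l : seq X) : nat -> X :=
  fun k => if (s <= k < s + size l)%N then nth (T k) l (k - s) else T k.

(* First loop of Merge; state (T, i, j); n is the end index s+n1+n2.
   [fuel] bounds the number of iterations; Merge supplies n1+n2+1, which is
   never exhausted since every non-breaking iteration increments i <= n. *)
Fixpoint merge_loop1 {X : Type} (fuel : nat) (n : nat) (T : nat -> X) (i j : nat)
  : dist ((nat -> X) * nat) :=
  match fuel with
  | 0 => dret (T, i)
  | fuel'.+1 =>
      dbind flip (fun b =>
        if ~~ b then
          (if i == j then dret (T, i) else merge_loop1 fuel' n T i.+1 j)
        else
          (if j == n then dret (T, i) else merge_loop1 fuel' n (swap T i j) i.+1 j.+1))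
  end.

(* Second loop: k = n - i remaining iterations; draw m uniformly in {s..i},
   swap T[i] and T[m], increment i. *)
Fixpoint merge_loop2 {X : Type} (k : nat) (s : nat) (T : nat -> X) (i : nat)
  : dist (nat -> X) :=
  match k with
  | 0 => dret T
  | k'.+1 => dbind (unif_range s i) (fun m => merge_loop2 k' s (swap T i m) i.+1)
  end.

Definition Merge {X : Type} (T : nat -> X) (s n1 n2 : nat) : dist (nat -> X) :=
  let n := (s + n1 + n2)%N in
  dbind (merge_loop1 (n1 + n2).+1 n T s (s + n1)%N)
        (fun Ti => merge_loop2 (n - Ti.2)%N s Ti.1 Ti.2).

Definition shuffled_merge {X : eqType} (T : nat -> X) (s : nat) (A B : seq X)
  : dist (nat -> X) :=
  dbind (unif_list (permutations A)) (fun a =>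
  dbind (unif_list (permutations B)) (fun b =>
  Merge (fill T s (a ++ b)) s (size A) (size B))).

(* Main.v *)
Require Import Defs.
From mathcomp Require Import all_boot all_order all_algebra.
From Stdlib Require Import FunctionalExtensionality.
From mathcomp Require Import zify ring.
Import GRing.Theory Num.Theory.
Local Open Scope ring_scope.

Module P1.
Set Implicit Arguments. Unset Strict Implicit.

Local Open Scope ring_scope.

Definition E {A : Type} (d : dist A) (g : A -> rat) : rat :=
  \sum_(px <- d) px.1 * g px.2.

Lemma E_ret A (x : A) g : E (dret x) g = g x.
Proof. by rewrite /E /dret big_cons big_nil mul1r addr0. Qed.

Lemma E_bind A B (d : dist A) (f : A -> dist B) g :
  E (dbind d f) g = E d (fun x => E (f x) g).
Proof.
rewrite /E /dbind big_flatten big_map; apply: eq_bigr => px _.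
rewrite big_map big_distrr; apply: eq_bigr => qy _ /=; by rewrite mulrA.
Qed.

Lemma E_unif A (l : seq A) g :
  E (unif_list l) g = (size l)%:R^-1 * \sum_(x <- l) g x.
Proof.
by rewrite /E /unif_list big_map big_distrr; apply: eq_bigr => x _ /=; rewrite div1r.
Qed.

Lemma E_ext A (d : dist A) g1 g2 : (forall x, g1 x = g2 x) -> E d g1 = E d g2.
Proof. by move=> H; apply: eq_bigr => px _; rewrite H. Qed.

Lemma probE A (d : dist A) P : prob d P = E d (fun x => (P x)%:R).
Proof.
rewrite /prob /E big_mkcond; apply: eq_bigr => px _ /=.
by case: (P px.2); rewrite ?mulr1 ?mulr0.
Qed.

Lemma E_flip g : E flip g = 2^-1 * (g false + g true).
Proof. by rewrite /flip E_unif !big_cons big_nil addr0. Qed.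

End P1.
Import P1.

Module P2.
Set Implicit Arguments. Unset Strict Implicit.

Local Open Scope ring_scope.

Definition sw (a b k : nat) : nat := if k == a then b else if k == b then a else k.

Lemma swK a b k : sw a b (sw a b k) = k.
Proof.
rewrite /sw; case: (eqVneq k a) => [->|ka]; first by case: (eqVneq b a) => [->|ba]; rewrite ?eqxx.
case: (eqVneq k b) => [->|kb]; first by rewrite eqxx.
by rewrite (negPf ka) (negPf kb).
Qed.

Lemma sw_lt a b k N : (a < N)%N -> (b < N)%N -> (k < N)%N -> (sw a b k < N)%N.
Proof. by move=> ha hb hk; rewrite /sw; case: ifP => _ //; case: ifP. Qed.

Local Close Scope ring_scope.
Section TS.
Variable X : eqType.
Variable x0 : X.

Definition tswap (c : seq X) (a b : nat) : seq X :=
  [seq nth x0 c (sw a b k) | k <- iota 0 (size c)].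

Lemma size_tswap c a b : size (tswap c a b) = size c.
Proof. by rewrite size_map size_iota. Qed.

Lemma nth_tswap c a b k : (k < size c)%N -> nth x0 (tswap c a b) k = nth x0 c (sw a b k).
Proof. by move=> hk; rewrite (nth_map 0%N) ?size_iota // nth_iota. Qed.

Lemma tswapK c a b : (a < size c)%N -> (b < size c)%N -> tswap (tswap c a b) a b = c.
Proof.
move=> ha hb; apply: (@eq_from_nth _ x0); rewrite ?size_tswap // => k hk.
by rewrite nth_tswap ?size_tswap // nth_tswap ?sw_lt // swK.
Qed.

Lemma perm_tswap c a b : (a < size c)%N -> (b < size c)%N -> perm_eq (tswap c a b) c.
Proof.
move=> ha hb.
have -> : tswap c a b = map (nth x0 c) (map (sw a b) (iota 0 (size c))) by rewrite -map_comp.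
have e : map (nth x0 c) (iota 0 (size c)) = c by rewrite map_nth_iota0 // take_size.
rewrite -[X in perm_eq _ X]e.
apply: perm_map; apply: uniq_perm; rewrite ?iota_uniq //.
  rewrite map_inj_uniq ?iota_uniq //; exact: (can_inj (swK a b)).
move=> k; rewrite mem_iota add0n /=; apply/mapP/idP.
  by case=> k' hk' ->; move: hk'; rewrite mem_iota add0n /= => hk'; apply: sw_lt.
by move=> hk; exists (sw a b k); rewrite ?swK // mem_iota add0n sw_lt.
Qed.

Lemma fill_tswap (T : nat -> X) s c a b : (a < size c)%N -> (b < size c)%N ->
  fill T s (tswap c a b) = swap (fill T s c) (s + a)%N (s + b)%N.
Proof.
move=> ha hb; apply: functional_extensionality => k.
rewrite /fill /swap size_tswap.
have hsa : (s <= s + a < s + size c)%N by rewrite leq_addr ltn_add2l.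
have hsb : (s <= s + b < s + size c)%N by rewrite leq_addr ltn_add2l.
case: ifP => hk.
  have hk' : (k - s < size c)%N by case/andP: hk => h1 h2; rewrite ltn_subLR.
  rewrite (set_nth_default x0) ?size_tswap // nth_tswap // /sw.
  case: (eqVneq k (s + a)%N) => [->|ka]; first by rewrite addKn eqxx hsb addKn (set_nth_default x0).
  have ka' : (k - s != a).
    by apply: contra ka => /eqP <-; rewrite subnKC //; case/andP: hk.
  rewrite (negPf ka').
  case: (eqVneq k (s + b)%N) => [->|kb]; first by rewrite addKn eqxx hsa addKn (set_nth_default x0).
  have kb' : (k - s != b).
    by apply: contra kb => /eqP <-; rewrite subnKC //; case/andP: hk.
  by rewrite (negPf kb') (set_nth_default x0).
case: (eqVneq k (s + a)%N) => [ka|ka]; first by rewrite ka hsa in hk.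
case: (eqVneq k (s + b)%N) => [kb|kb]; first by rewrite kb hsb in hk.
by rewrite ?hk.
Qed.

End TS.
Local Open Scope ring_scope.

Lemma sum_invol (Y : eqType) (l : seq Y) (f : Y -> Y) (F : Y -> rat) :
  uniq l -> {in l, forall x, f x \in l} -> {in l, forall x, f (f x) = x} ->
  \sum_(x <- l) F x = \sum_(x <- l) F (f x).
Proof.
move=> ul fl ff.
rewrite -(big_map f xpredT F); apply: perm_big; apply: uniq_perm => //.
  rewrite map_inj_in_uniq // => x y hx hy e.
  by rewrite -(ff x hx) -(ff y hy) e.
move=> x; apply/idP/mapP.
  by move=> hx; exists (f x); rewrite ?fl ?ff.
by case=> y hy ->; apply: fl.
Qed.

End P2.
Import P2.

Module P3.
Set Implicit Arguments. Unset Strict Implicit.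

Local Open Scope ring_scope.

Section L2.
Variable X : eqType.
Variable x0 : X.
Variable T0 : nat -> X.
Variable s : nat.
Variable L : seq X.
Hypothesis uL : uniq L.
Local Notation N := (size L).
Variable g : (nat -> X) -> rat.

Definition U := (size (permutations L))%:R^-1 * \sum_(c <- permutations L) g (fill T0 s c).

Lemma permsP c : c \in permutations L -> perm_eq c L.
Proof. by rewrite mem_permutations. Qed.

Lemma size_perms c : c \in permutations L -> size c = N.
Proof. by move/permsP/perm_size. Qed.

Lemma uniq_perms c : c \in permutations L -> uniq c.
Proof. by move/permsP/perm_uniq => ->. Qed.

Lemma drop_tswap c ia m : (ia < size c)%N -> (m <= ia)%N ->
  drop ia (tswap x0 c ia m) = nth x0 c m :: drop ia.+1 c.
Proof.
move=> hia hm; rewrite (drop_nth x0) ?size_tswap // nth_tswap // /sw eqxx; congr (_ :: _).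
apply: (@eq_from_nth _ x0); rewrite !size_drop ?size_tswap // => i hi.
rewrite !nth_drop nth_tswap; last by rewrite -ltn_subRL.
rewrite /sw; case: eqP => [e|_]; first lia.
case: eqP => [e|_] //; lia.
Qed.

Definition omega' (ia : nat) (om : seq X -> rat) (w : seq X) : rat :=
  (ia.+1)%:R^-1 * \sum_(x <- L | x \notin w) om (x :: w).

Lemma reindex ia (om : seq X -> rat) (Phi : seq X -> rat) : (ia < N)%N ->
  \sum_(c <- permutations L) om (drop ia c) *
     ((ia.+1)%:R^-1 * \sum_(m <- iota 0 ia.+1) Phi (tswap x0 c ia m))
  = \sum_(c <- permutations L) omega' ia om (drop ia.+1 c) * Phi c.
Proof.
move=> hN.
transitivity ((ia.+1)%:R^-1 * \sum_(m <- iota 0 ia.+1) \sum_(c <- permutations L)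
    om (drop ia c) * Phi (tswap x0 c ia m)).
  rewrite exchange_big big_distrr; apply: eq_bigr => c _ /=.
  by rewrite mulrCA big_distrr.
transitivity ((ia.+1)%:R^-1 * \sum_(m <- iota 0 ia.+1) \sum_(c <- permutations L)
    om (drop ia (tswap x0 c ia m)) * Phi c).
  congr (_ * _); rewrite big_seq_cond [RHS]big_seq_cond; apply: eq_bigr => m.
  rewrite andbT mem_iota add0n /= => hm.
  rewrite (@sum_invol _ _ (fun c => tswap x0 c ia m)) ?permutations_uniq //.
  - rewrite big_seq [RHS]big_seq; apply: eq_bigr => c hc.
    by rewrite tswapK // (size_perms hc) // (leq_trans hm).
  - move=> c hc; rewrite mem_permutations; apply: perm_trans (permsP hc).
    by apply: perm_tswap; rewrite (size_perms hc) // (leq_trans hm).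
  - by move=> c hc; rewrite tswapK // (size_perms hc) // (leq_trans hm).
rewrite exchange_big big_distrr big_seq [RHS]big_seq; apply: eq_bigr => c hc /=.
have sc := size_perms hc.
rewrite /omega' -big_distrl /= mulrA; congr (_ * _ * _).
transitivity (\sum_(m <- iota 0 ia.+1) om (nth x0 c m :: drop ia.+1 c)).
  rewrite big_seq [RHS]big_seq; apply: eq_bigr => m; rewrite (mem_iota 0 ia.+1) add0n => hm.
  by rewrite drop_tswap // sc.
rewrite -(big_map (nth x0 c) xpredT (fun x => om (x :: drop ia.+1 c))) map_nth_iota0; last by rewrite sc.
rewrite -[RHS]big_filter; apply: perm_big; apply: uniq_perm.
- by rewrite take_uniq // (uniq_perms hc).
- by rewrite filter_uniq.
move=> x; rewrite mem_filter -(perm_mem (permsP hc)).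
have hcx : (x \in c) = (x \in take ia.+1 c) || (x \in drop ia.+1 c) by rewrite -mem_cat cat_take_drop.
have hd : ~~ has (mem (take ia.+1 c)) (drop ia.+1 c).
  by move: (uniq_perms hc); rewrite -{1}(cat_take_drop ia.+1 c) cat_uniq => /and3P [].
rewrite hcx; case: (boolP (x \in take ia.+1 c)) => hx /=.
  rewrite andbT; apply/esym/negP => hxd; move/hasP: hd; apply; by exists x.
by case: (x \in drop ia.+1 c).
Qed.

Lemma sum1 (Y : Type) (l : seq Y) : \sum_(x <- l) (1 : rat) = (size l)%:R.
Proof. by elim: l => [|x l IH]; rewrite ?big_nil // big_cons IH /= -addn1 natrD addrC. Qed.

Lemma loop2_step k ia c : (ia < N)%N -> c \in permutations L ->
  E (merge_loop2 k.+1 s (fill T0 s c) (s + ia)%N) g =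
  (ia.+1)%:R^-1 * \sum_(m <- iota 0 ia.+1) E (merge_loop2 k s (fill T0 s (tswap x0 c ia m)) (s + ia.+1)%N) g.
Proof.
move=> hia hc; have sc := size_perms hc.
rewrite /= E_bind /unif_range E_unif size_iota addKn; congr (_ * _).
rewrite -{1}(addn0 s) iotaDl big_map big_seq [RHS]big_seq; apply: eq_bigr => m.
rewrite (mem_iota 0 ia.+1) add0n => hm.
by rewrite fill_tswap ?sc ?addnS // (leq_trans hm).
Qed.

Lemma L2 k : forall ia (om : seq X -> rat), (ia + k = N)%N ->
  \sum_(c <- permutations L) om (drop ia c) * E (merge_loop2 k s (fill T0 s c) (s + ia)%N) g
  = (\sum_(c <- permutations L) om (drop ia c)) * U.
Proof.
elim: k => [|k IH] ia om hk.
  rewrite addn0 in hk; rewrite hk.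
  transitivity (om [::] * \sum_(c <- permutations L) g (fill T0 s c)).
    rewrite big_distrr big_seq [RHS]big_seq; apply: eq_bigr => c hc.
    by rewrite E_ret drop_oversize // size_perms.
  transitivity ((\sum_(c <- permutations L) om [::] * 1) * U); last first.
    congr (_ * _); rewrite big_seq [RHS]big_seq; apply: eq_bigr => c hc.
    by rewrite drop_oversize ?size_perms // mulr1.
  rewrite -big_distrr sum1 /U /= mulrA -[om [::] * _ * _]mulrA mulfV ?mulr1 //.
  by rewrite size_permutations // pnatr_eq0 -lt0n fact_gt0.
have hia : (ia < N)%N by rewrite -hk addnS ltnS leq_addr.
transitivity (\sum_(c <- permutations L) om (drop ia c) *
     ((ia.+1)%:R^-1 * \sum_(m <- iota 0 ia.+1)
        (fun c' => E (merge_loop2 k s (fill T0 s c') (s + ia.+1)%N) g) (tswap x0 c ia m))).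
  by rewrite big_seq [RHS]big_seq; apply: eq_bigr => c hc; rewrite loop2_step.
rewrite (@reindex ia om (fun c' => E (merge_loop2 k s (fill T0 s c') (s + ia.+1)%N) g) hia) IH; last by rewrite addSnnS.
congr (_ * _).
have := @reindex ia om (fun _ => 1) hia.
have e2 : \sum_(c <- permutations L) om (drop ia c) * ((ia.+1)%:R^-1 * \sum_(m <- iota 0 ia.+1) (1:rat))
   = \sum_(c <- permutations L) om (drop ia c).
  by apply: eq_bigr => c _; rewrite sum1 size_iota mulVf ?mulr1 // pnatr_eq0.
rewrite e2 => ->; by apply: eq_bigr => c _; rewrite mulr1.
Qed.
End L2.

End P3.
Import P3.

Module P4.
Set Implicit Arguments. Unset Strict Implicit.
Local Close Scope ring_scope.


Section Good.
Variable X : eqType.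
Variable x0 : X.
Variables A B : seq X.

Definition good (t ja : nat) (c : seq X) : bool :=
  all (fun x => x \in A) (drop t (take ja c)) && all (fun x => x \in B) (drop ja c).

Lemma slice_eq (c c' : seq X) lo hi : size c' = size c ->
  (forall k, lo <= k -> k < hi -> k < size c -> nth x0 c' k = nth x0 c k) ->
  drop lo (take hi c') = drop lo (take hi c).
Proof.
move=> hs H; apply: (@eq_from_nth _ x0); first by rewrite !size_drop !size_take_min hs.
move=> i; rewrite size_drop size_take_min => hi'.
rewrite !nth_drop !nth_take; try lia.
apply: H; lia.
Qed.

Lemma tswap_id c a : tswap x0 c a a = c.
Proof.
apply: (@eq_from_nth _ x0); rewrite ?size_tswap // => k hk.
rewrite nth_tswap // /sw; case: eqP => [->|] //.
Qed.

Lemma good1 t ja c : t < ja <= size c ->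
  good t ja c = (nth x0 c t \in A) && good t.+1 ja c.
Proof.
case/andP=> h1 h2; rewrite /good (drop_nth x0); last by rewrite size_takel.
by rewrite /= nth_take // andbA.
Qed.

Lemma good2 t ja c : t <= ja < size c ->
  good t ja (tswap x0 c t ja) = (nth x0 c t \in B) && good t.+1 ja.+1 c.
Proof.
case/andP=> h1 h2.
case: (ltngtP t ja) h1 h2 => // [lt _ h2|<- _ h2].
  rewrite /good (drop_nth x0); last by rewrite size_takel // size_tswap ltnW.
  rewrite nth_take // nth_tswap; last by lia.
  rewrite /sw eqxx.
  rewrite (slice_eq (c' := tswap x0 c t ja) (c := c)); last first.
  - move=> k hk1 hk2 hk3; rewrite nth_tswap ?size_tswap // /sw.
    case: eqP => [e|_]; first lia. case: eqP => [e|_] //; lia.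
  - by rewrite size_tswap.
  rewrite [drop ja _](drop_nth x0) ?size_tswap // nth_tswap // /sw eqxx.
  case: eqP => [e|_]; first lia.
  have -> : drop ja.+1 (tswap x0 c t ja) = drop ja.+1 c.
    rewrite -(take_oversize (n := size c) (s := tswap x0 c t ja)) ?size_tswap // -[in RHS](take_size c).
    apply: slice_eq; first by rewrite size_tswap.
    move=> k hk1 hk2 hk3; rewrite nth_tswap // /sw; case: eqP => [e|_]; first lia.
    case: eqP => [e|_] //; lia.
  rewrite (take_nth x0 h2) drop_rcons ?size_takel // ?all_rcons; last by rewrite ltnW.
  rewrite /=; move: (nth x0 c ja \in A) (nth x0 c t \in B) (all _ (drop t.+1 _)) (all _ (drop ja.+1 _)) => [] [] [] [] //.
rewrite tswap_id /good [drop t (take t c)]drop_oversize ?size_take_min ?geq_minl // [drop t.+1 (take t.+1 c)]drop_oversize ?size_take_min ?geq_minl // (drop_nth x0 h2) /=.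
by [].

Qed.
End Good.

End P4.
Import P4.

Module P5.
Set Implicit Arguments. Unset Strict Implicit.

Local Open Scope ring_scope.

Lemma sum_cond (Y : Type) (l : seq Y) (P : pred Y) (F : Y -> rat) :
  \sum_(c <- l | P c) F c = \sum_(c <- l) (P c)%:R * F c.
Proof. by rewrite big_mkcond; apply: eq_bigr => c _; case: (P c); rewrite ?mul1r ?mul0r. Qed.

Lemma iotaS m k : iota m.+1 k = map succn (iota m k).
Proof. by rewrite -add1n iotaDl; apply: eq_map => x; rewrite add1n. Qed.

Section L1.
Variable X : eqType.
Variable x0 : X.
Variable T0 : nat -> X.
Variable s : nat.
Variables A B : seq X.
Hypothesis uAB : uniq (A ++ B).
Local Notation L := (A ++ B).
Local Notation N := (size (A ++ B)).
Local Notation n := (s + N)%N.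

Definition Y f t ja c (h : (nat -> X) * nat -> rat) :=
  E (merge_loop1 f n (fill T0 s c) (s + t)%N (s + ja)%N) h.

Definition S f t h := \sum_(ja <- iota t (N.+1 - t))
   \sum_(c <- permutations L | good A B t ja c) Y f t ja c h.

Lemma Ystep f t ja c h : (t <= ja)%N -> (ja <= N)%N -> size c = N ->
  Y f.+1 t ja c h = 2^-1 *
   ((if t == ja then h (fill T0 s c, (s + t)%N) else Y f t.+1 ja c h) +
    (if ja == N then h (fill T0 s c, (s + t)%N) else Y f t.+1 ja.+1 (tswap x0 c t ja) h)).
Proof.
move=> ht hja sc.
rewrite /Y /= E_bind E_flip /= eqn_add2l.
congr (_ * (_ + _)).
  by case: ifP => _; rewrite ?E_ret // addnS.
rewrite eqn_add2l; case: ifP => e; rewrite ?E_ret //.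
rewrite fill_tswap ?sc ?addnS //; last by rewrite ltn_neqAle e hja.

by rewrite (leq_ltn_trans ht) // ltn_neqAle e hja.
Qed.

Lemma xorAB c t : c \in permutations L -> (t < N)%N ->
  (nth x0 c t \in B) = ~~ (nth x0 c t \in A).
Proof.
move=> hc ht.
have : nth x0 c t \in L by rewrite -(perm_mem (permsP hc)) mem_nth // (size_perms hc).
move: uAB; rewrite cat_uniq mem_cat => /and3P [_ hAB _].
case: (boolP (nth x0 c t \in A)) => hA //= _.
apply/negP => hB; move/hasP: hAB; apply; by exists (nth x0 c t).
Qed.

Lemma decomp f t h : (t <= N)%N ->
  S f.+1 t h = 2^-1 * ((\sum_(c <- permutations L | good A B t t c) h (fill T0 s c, (s+t)%N))
     + (\sum_(c <- permutations L | good A B t N c) h (fill T0 s c, (s+t)%N)) + S f t.+1 h).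
Proof.
move=> ht; rewrite /S subSS subSn //.
transitivity (\sum_(ja <- iota t (N - t).+1) \sum_(c <- permutations L | good A B t ja c)
   2^-1 * ((if t == ja then h (fill T0 s c, (s + t)%N) else Y f t.+1 ja c h) +
    (if ja == N then h (fill T0 s c, (s + t)%N) else Y f t.+1 ja.+1 (tswap x0 c t ja) h))).
  rewrite big_seq [RHS]big_seq; apply: eq_bigr => ja; rewrite mem_iota => hja.
  rewrite big_seq_cond [RHS]big_seq_cond; apply: eq_bigr => c /andP [hc _].
  rewrite Ystep //; [move: hja; lia | move: hja; lia | exact: size_perms hc].
pose bf := fun ja c => if t == ja then h (fill T0 s c, (s + t)%N) else Y f t.+1 ja c h.
pose bt := fun ja c => if ja == N then h (fill T0 s c, (s + t)%N) else Y f t.+1 ja.+1 (tswap x0 c t ja) h.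
transitivity (2^-1 * (\sum_(ja <- iota t (N - t).+1) \sum_(c <- permutations L | good A B t ja c) bf ja c
   + \sum_(ja <- iota t (N - t).+1) \sum_(c <- permutations L | good A B t ja c) bt ja c)).
  rewrite -big_split big_distrr; apply: eq_bigr => ja _; rewrite -big_split big_distrr //.
have Ebf : \sum_(ja <- iota t (N - t).+1) \sum_(c <- permutations L | good A B t ja c) bf ja c =
   \sum_(c <- permutations L | good A B t t c) h (fill T0 s c, (s+t)%N) +
   \sum_(ja <- iota t.+1 (N - t)) \sum_(c <- permutations L | good A B t ja c) Y f t.+1 ja c h.
  rewrite big_cons /bf eqxx; congr (_ + _).
  rewrite big_seq [RHS]big_seq; apply: eq_bigr => ja; rewrite mem_iota => hja.
  have -> : (t == ja) = false by apply/negbTE; move: hja; lia.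
  by [].
have Ebt : \sum_(ja <- iota t (N - t).+1) \sum_(c <- permutations L | good A B t ja c) bt ja c =
   \sum_(ja <- iota t (N - t)) \sum_(c <- permutations L | good A B t ja (tswap x0 c t ja)) Y f t.+1 ja.+1 c h +
   \sum_(c <- permutations L | good A B t N c) h (fill T0 s c, (s+t)%N).
  have iE2 : iota t (N - t).+1 = iota t (N - t) ++ [:: N] by rewrite -addn1 iotaD subnKC.
  rewrite iE2 big_cat big_seq1 /bt eqxx /=; apply: f_equal2; last by [].
  rewrite big_seq [RHS]big_seq; apply: eq_bigr => ja; rewrite mem_iota => hja.
  have hjaN : (ja < N)%N by move: hja; lia.
  have hjt : (t < N)%N by move: hja; lia.
  have -> : (ja == N) = false by apply/negbTE; move: hja; lia.
  rewrite (sum_cond _ (good A B t ja)) (sum_cond _ (fun c => good A B t ja (tswap x0 c t ja))).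
  rewrite (@sum_invol _ _ (fun c => tswap x0 c t ja)) ?permutations_uniq //.
  - rewrite big_seq [RHS]big_seq; apply: eq_bigr => c hc.
    by rewrite tswapK // (size_perms hc).
  - move=> c hc; rewrite mem_permutations; apply: perm_trans (permsP hc).
    by apply: perm_tswap; rewrite (size_perms hc).
  - by move=> c hc; rewrite tswapK // (size_perms hc).
have comb : \sum_(ja <- iota t.+1 (N - t)) \sum_(c <- permutations L | good A B t ja c) Y f t.+1 ja c h +
   \sum_(ja <- iota t (N - t)) \sum_(c <- permutations L | good A B t ja (tswap x0 c t ja)) Y f t.+1 ja.+1 c h =
   \sum_(ja <- iota t.+1 (N - t)) \sum_(c <- permutations L | good A B t.+1 ja c) Y f t.+1 ja c h.
  rewrite iotaS !big_map -big_split big_seq [RHS]big_seq; apply: eq_bigr => ja; rewrite mem_iota => hja.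
  have hjaN : (ja < N)%N by move: hja; lia.
  have hjt : (t < N)%N by move: hja; lia.
  rewrite (sum_cond _ (good A B t ja.+1)) (sum_cond _ (fun c => good A B t ja (tswap x0 c t ja))).
  rewrite (sum_cond _ (good A B t.+1 ja.+1)).
  rewrite -big_split big_seq [RHS]big_seq; apply: eq_bigr => c hc /=.
  have sc := size_perms hc.
  rewrite (good1 x0); last by rewrite sc; move: hja; lia.
  rewrite (good2 x0); last by rewrite sc; move: hja; lia.
  rewrite xorAB //; case: (nth x0 c t \in A); case: (good _ _ _ _ _); rewrite /= ?mul0r ?mul1r ?addr0 ?add0r //.
rewrite Ebf Ebt -comb; congr (_ * _).
by ring.
Qed.

Variable g : (nat -> X) -> rat.
Definition hg (Ti : (nat -> X) * nat) : rat := E (merge_loop2 (n - Ti.2) s Ti.1 Ti.2) g.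
Definition h1 (Ti : (nat -> X) * nat) : rat := 1.

Lemma brk t (P : pred (seq X)) (om : seq X -> bool) : (t <= N)%N ->
  (forall c, c \in permutations L -> P c = om (drop t c)) ->
  \sum_(c <- permutations L | P c) hg (fill T0 s c, (s + t)%N)
  = (\sum_(c <- permutations L | P c) h1 (fill T0 s c, (s + t)%N)) * U T0 s L g.
Proof.
move=> ht hP.
rewrite (sum_cond _ P) [in RHS](sum_cond _ P).
transitivity (\sum_(c <- permutations L) (om (drop t c))%:R * E (merge_loop2 (N - t) s (fill T0 s c) (s + t)%N) g).
  rewrite big_seq [RHS]big_seq; apply: eq_bigr => c hc.
  by rewrite hP // /hg /= subnDl.
rewrite (L2 x0 T0 s uAB g (k := (N - t)%N) (ia := t) (fun w => (om w)%:R)); last by rewrite subnKC.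
congr (_ * _); rewrite big_seq [RHS]big_seq; apply: eq_bigr => c hc.
by rewrite hP // /h1 mulr1.
Qed.

Lemma good_tt t c : good A B t t c = all (fun x => x \in B) (drop t c).
Proof. by rewrite /good drop_oversize // size_take_min geq_minl. Qed.

Lemma good_tN t c : size c = N -> good A B t N c = all (fun x => x \in A) (drop t c).
Proof. by move=> sc; rewrite /good take_oversize ?sc // (drop_oversize (n := N)) ?sc // /= andbT. Qed.

Lemma L1main f : forall t, (N.+1 - t <= f)%N -> S f t hg = S f t h1 * U T0 s L g.
Proof.
elim: f => [|f IH] t hf.
  rewrite /S; have -> : (N.+1 - t = 0)%N by move: hf; lia.
  by rewrite !big_nil mul0r.
case: (leqP t N) => ht; last first.
  rewrite /S; have -> : (N.+1 - t = 0)%N by move: ht; lia.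
  by rewrite !big_nil mul0r.
rewrite !decomp // IH; last by move: hf; lia.
rewrite (brk (om := fun w => all (fun x => x \in B) w)) //; last by move=> c _; rewrite good_tt.
rewrite (@brk t _ (fun w => all (fun x => x \in A) w)) //; last by move=> c hc; rewrite good_tN // (size_perms hc).
by rewrite -mulrA !mulrDl.
Qed.
End L1.

End P5.
Import P5.

Module P6.
Set Implicit Arguments. Unset Strict Implicit.

Local Open Scope ring_scope.

Lemma mass1 (X : Type) f n (T : nat -> X) i j :
  E (merge_loop1 f n T i j) (fun _ => 1) = 1.
Proof.
elim: f T i j => [|f IH] T i j; first by rewrite E_ret.
rewrite /= E_bind E_flip /=.
case: ifP => _; case: ifP => _; rewrite ?E_ret ?IH -mulr2n mulVf // pnatr_eq0.
Qed.

Lemma sum_count (Y : Type) (l : seq Y) (P : pred Y) :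
  \sum_(x <- l) ((P x)%:R : rat) = (count P l)%:R.
Proof. by elim: l => [|x l IH]; rewrite ?big_nil // big_cons IH /= natrD; case: (P x). Qed.

Section Top.
Variable X : eqType.
Variable x0 : X.
Variables A B : seq X.
Hypothesis uAB : uniq (A ++ B).
Local Notation L := (A ++ B).
Local Notation N := (size (A ++ B)).

Lemma uA : uniq A. Proof. by move: uAB; rewrite cat_uniq => /and3P []. Qed.
Lemma uB : uniq B. Proof. by move: uAB; rewrite cat_uniq => /and3P []. Qed.
Lemma disjAB x : x \in A -> x \in B -> False.
Proof.
move=> hA hB; move: uAB; rewrite cat_uniq => /and3P [_ h _].
by move/hasP: h; apply; exists x.
Qed.

Lemma AB (F : seq X -> rat) :
  \sum_(a <- permutations A) \sum_(b <- permutations B) F (a ++ b)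
  = \sum_(c <- permutations L | good A B 0 (size A) c) F c.
Proof.
rewrite -[RHS]big_filter -(big_allpairs_dep (h := fun a b => a ++ b) (r2 := fun _ => permutations B)).
apply: perm_big; apply: uniq_perm.
- apply: allpairs_uniq; rewrite ?permutations_uniq //.
  move=> [a b] [a' b'] /allpairsP [[a1 b1] [ha hb [-> ->]]] /allpairsP [[a2 b2] [ha' hb' [-> ->]]] /= e.
  move/eqP: e; rewrite eqseq_cat; last by rewrite (size_perms ha) (size_perms ha').
  by case/andP => /eqP -> /eqP ->.
- by rewrite filter_uniq // permutations_uniq.
move=> c; apply/allpairsP/idP.
  case=> [[a b] [ha hb ->]] /=.
  have sa := size_perms ha.
  rewrite mem_filter /good drop0 take_size_cat // drop_size_cat //.
  rewrite mem_permutations perm_cat ?(permsP ha) ?(permsP hb) // andbT.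
  apply/andP; split; apply/allP => x hx.
    by rewrite -(perm_mem (permsP ha)).
  by rewrite -(perm_mem (permsP hb)).
rewrite mem_filter => /andP [hg hc].
move: hg; rewrite /good drop0 => /andP [/allP hA /allP hB].
have uc := uniq_perms uAB hc.
have mc : forall x, (x \in c) = (x \in A) || (x \in B).
  by move=> x; rewrite (perm_mem (permsP hc)) mem_cat.
exists (take (size A) c, drop (size A) c); split; last by rewrite /= cat_take_drop.
  rewrite mem_permutations /=; apply: uniq_perm; rewrite ?take_uniq ?uA //.
  move=> x; apply/idP/idP; first by apply: hA.
  move=> xA; have : x \in take (size A) c ++ drop (size A) c by rewrite cat_take_drop mc xA.
  rewrite mem_cat => /orP [xt | xd]; first exact: xt.
  by case: (disjAB xA (hB _ xd)).
rewrite mem_permutations /=; apply: uniq_perm; rewrite ?drop_uniq ?uB //.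
move=> x; apply/idP/idP; first by apply: hB.
move=> xB; have : x \in take (size A) c ++ drop (size A) c by rewrite cat_take_drop mc xB orbT.
rewrite mem_cat => /orP [xt | xd]; last exact: xd.
by case: (disjAB (hA _ xt) xB).
Qed.

Lemma good0 c ja : c \in permutations L -> (ja <= N)%N -> good A B 0 ja c -> ja = size A.
Proof.
move=> hc hja; rewrite /good drop0 => /andP [/allP hA /allP hB].
have uc := uniq_perms uAB hc.
have sc := size_perms hc.
have h1 := uniq_leq_size (take_uniq _ uc) hA.
have h2 := uniq_leq_size (drop_uniq _ uc) hB.
rewrite size_takel ?sc // in h1; rewrite size_drop sc in h2.
move: h1 h2 hja; rewrite size_cat; lia.
Qed.

Lemma S0 (T0 : nat -> X) s f h : S T0 s A B f 0 h =
  \sum_(c <- permutations L | good A B 0 (size A) c) Y T0 s A B f 0 (size A) c h.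
Proof.
rewrite /S subn0 (bigD1_seq (size A)); last by rewrite iota_uniq.
  set Z := (X in _ _ X = _).
  have -> : Z = 0.
    rewrite /Z big1_seq // => ja /andP [hne hja].
    rewrite big1_seq // => c /andP [hg hc].
    move: hja; rewrite mem_iota add0n ltnS => hja.
    by move: hne; rewrite (good0 hc hja hg) eqxx.
  exact: addr0.
by rewrite mem_iota add0n ltnS size_cat leq_addr.
Qed.

Lemma map_fill (T : nat -> X) s c' : map (fill T s c') (iota s (size c')) = c'.
Proof.
have -> : iota s (size c') = map (addn s) (iota 0 (size c')) by rewrite -iotaDl addn0.
rewrite -map_comp.
transitivity (map (nth x0 c') (iota 0 (size c'))); last by rewrite map_nth_iota0 // take_size.
apply/eq_in_map => k; rewrite mem_iota add0n /= => hk.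
rewrite /fill leq_addr ltn_add2l hk /= addKn; exact: set_nth_default.
Qed.

End Top.


End P6.
Import P6.

Unset Implicit Arguments. Set Strict Implicit.
Theorem mainTheorem1 (X : eqType) (T : nat -> X) (s : nat) (A B : seq X)
  (hAB : uniq (A ++ B)) (c : seq X) (hc : perm_eq c (A ++ B)) :
  prob (shuffled_merge T s A B)
       (fun T' => map T' (iota s (size A + size B)) == c)
  = 1 / ((size A + size B)`!)%:R.
Proof.
set ind := fun T' : nat -> X => ((map T' (iota s (size A + size B)) == c)%:R : rat).
have x0 : X := T 0%N.
rewrite probE /shuffled_merge E_bind E_unif.
have hM : forall c', E (Merge (fill T s c') s (size A) (size B)) ind
    = Y T s A B (size (A ++ B)).+1 0 (size A) c' (hg s A B ind).
  by move=> c'; rewrite /Merge /Y /hg E_bind /= size_cat addn0 addnA.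
transitivity ((size (permutations A))%:R^-1 * (size (permutations B))%:R^-1 *
   \sum_(a <- permutations A) \sum_(b <- permutations B) Y T s A B (size (A ++ B)).+1 0 (size A) (a ++ b) (hg s A B ind)).
  rewrite -[RHS]mulrA [in RHS]big_distrr; congr (_ * _); apply: eq_bigr => a _.
  rewrite E_bind E_unif; congr (_ * _); apply: eq_bigr => b _.
  exact: hM.
rewrite (AB hAB (fun c0 => Y T s A B (size (A ++ B)).+1 0 (size A) c0 (hg s A B ind))) -(S0 hAB).
rewrite (L1main x0 T s hAB); last by rewrite subn0.
rewrite (S0 hAB).
have -> : \sum_(c0 <- permutations (A ++ B) | good A B 0 (size A) c0)
      Y T s A B (size (A ++ B)).+1 0 (size A) c0 (@h1 X) = (size (permutations A))%:R * (size (permutations B))%:R.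
  transitivity (\sum_(c0 <- permutations (A ++ B) | good A B 0 (size A) c0) (fun _ => (1:rat)) c0).
    by apply: eq_bigr => c0 _; rewrite /Y /h1 mass1.
  rewrite -(AB hAB (fun _ => (1:rat))) /=.
  transitivity (\sum_(a <- permutations A) (size (permutations B))%:R * (1:rat)).
    by apply: eq_bigr => a _; rewrite sum1 mulr1.
  by rewrite -big_distrr sum1 mulrC.
have pa : (size (permutations A))%:R != 0 :> rat.
  by rewrite size_permutations ?(uA hAB) // pnatr_eq0 -lt0n fact_gt0.
have pb : (size (permutations B))%:R != 0 :> rat.
  by rewrite size_permutations ?(uB hAB) // pnatr_eq0 -lt0n fact_gt0.
set a := (size (permutations A))%:R in pa *.
set b := (size (permutations B))%:R in pb *.
have -> : a^-1 / b * (a * b * U T s (A ++ B) ind) = U T s (A ++ B) ind.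
  by field; rewrite pa pb.
rewrite /U (size_permutations hAB) size_cat.
have -> : \sum_(c' <- permutations (A ++ B)) ind (fill T s c') = 1.
  transitivity (\sum_(c' <- permutations (A ++ B)) ((c' == c)%:R : rat)).
    rewrite big_seq [RHS]big_seq; apply: eq_bigr => c' hc'.
    by rewrite /ind -size_cat -(size_perms hc') (map_fill x0).
  rewrite (sum_count _ (fun c' => c' == c)).
  have := count_uniq_mem c (permutations_uniq (A ++ B)).
  by rewrite mem_permutations hc => ->.
by rewrite mulr1 div1r.
Qed.
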